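(* Let $d=4k$ with $k>1$, $n=d/2$, $\omega=e^{2\pi i/d}$, and $F_d=(\omega^{jl})_{j,l=0}^{d-1}$ the Fourier matrix. For $\vec\alpha=(\alpha_1,\dots,\alpha_{n-1})\in\mathbb{R}^{n-1}$ define the real $d\times d$ matrix $R_1(\vec\alpha)$ by $R_1(\vec\alpha)_{j,l}=0$ if $j$ is even, $R_1(\vec\alpha)_{j,l}=0$ if $j$ is odd and $l\equiv0\pmod n$, and $R_1(\vec\alpha)_{j,l}=\alpha_{(l\bmod n)}$ otherwise (where $l\bmod n\in\{1,\dots,n-1\}$), and set $R_2(\vec\beta)=R_1(\vec\beta)^t$. Then for all $\vec\alpha,\vec\beta\in\mathbb{R}^{n-1}$ the matrices $F_d\circ\exp\big(i(R_1(\vec\alpha)+R_2(\vec\beta))\big)$ and $F_d\circ\exp\big(i(R_1(\vec\alpha)+R_2(\vec\beta))^t\big)$ are complex Hadamard matrices.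
   Context: A $d\times d$ complex Hadamard matrix has unimodular entries and pairwise orthogonal columns. $\circ$ denotes the entrywise product and $\exp(iR)$ the entrywise exponential $(\exp(iR))_{jl}=e^{iR_{jl}}$; rows and columns are indexed $0,\dots,d-1$. *)

(* Defs.v *)
From HB Require Import structures.
From mathcomp Require Import all_boot all_order all_algebra.
From mathcomp Require Import reals trigo.
From mathcomp Require Import complex.
Set Implicit Arguments. Unset Strict Implicit. Unset Printing Implicit Defensive.
Import Order.TTheory GRing.Theory Num.Theory.
Local Open Scope ring_scope.
Local Open Scope complex_scope.

Definition expi (R : realType) (x : R) : R[i] := Complex (cos x) (sin x).

Definition is_complex_hadamard (R : realType) (d : nat) (H : 'M[R[i]]_d) : Prop :=
  (forall j l, `|H j l| = 1) /\
  (forall l m : 'I_d, l != m -> \sum_(j < d) H j l * (H j m)^* = 0).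

Definition fourier_mx (R : realType) (d : nat) : 'M[R[i]]_d :=
  \matrix_(j < d, l < d) (expi (2 * pi / d%:R : R)) ^+ (j * l).

Definition hadamard_prod (R : realType) (d : nat) (A B : 'M[R[i]]_d) : 'M[R[i]]_d :=
  \matrix_(j, l) (A j l * B j l).
Definition exp_i_mx (R : realType) (d : nat) (M : 'M[R]_d) : 'M[R[i]]_d :=
  \matrix_(j, l) expi (M j l).

(* alpha = (alpha_1, ..., alpha_{m}) given as a function on 'I_m (alpha_s stored at index s-1);
   alpha_at a s = alpha_s for 1 <= s <= m *)
Definition alpha_at (R : realType) (m : nat) (a : 'I_m -> R) (s : nat) : R :=
  match @insub nat (fun t => t < m)%N _ s.-1 with Some o => a o | None => 0 end.

Definition R1 (R : realType) (k : nat) (a : 'I_(2 * k - 1) -> R) : 'M[R]_(4 * k) :=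
  \matrix_(j, l)
    if ~~ odd j then 0
    else if (l %% (2 * k) == 0)%N then 0
    else alpha_at a (l %% (2 * k)).

Definition R2 (R : realType) (k : nat) (b : 'I_(2 * k - 1) -> R) : 'M[R]_(4 * k) :=
  (R1 b)^T.

(* Main.v *)
Require Import Defs.
From HB Require Import structures.
From mathcomp Require Import all_boot all_order all_algebra.
From mathcomp Require Import reals trigo.
From mathcomp Require Import complex.
From mathcomp Require Import ring lra zify.
Set Implicit Arguments. Unset Strict Implicit. Unset Printing Implicit Defensive.
Import Order.TTheory GRing.Theory Num.Theory.
Local Open Scope ring_scope.
Local Open Scope complex_scope.

Section S.
Variable R : realType.

Lemma expiD (x y : R) : expi (x + y) = expi x * expi y.
Proof. rewrite /expi cosD sinD /=; congr Complex; ring. Qed.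

Lemma expi0 : expi (0:R) = 1.
Proof. by rewrite /expi cos0 sin0. Qed.

Lemma expiN (x : R) : conjc (expi x) = expi (- x).
Proof. by rewrite /expi cosN sinN. Qed.

Lemma expiX (x : R) n : expi x ^+ n = expi (x *+ n).
Proof. elim: n => [|n IH]; first by rewrite expr0 mulr0n expi0.
by rewrite exprS IH mulrS expiD. Qed.

Lemma norm_expi (x : R) : `|expi x| = 1.
Proof. by rewrite normc_def /= cos2Dsin2 sqrtr1. Qed.

Lemma expipi : expi (pi : R) = -1.
Proof. rewrite /expi cospi sinpi; apply/eqP; rewrite eq_complex /= oppr0 !eqxx //. Qed.

Variable k : nat.
Hypothesis hk : (0 < k)%N.
Let d := (4 * k)%N.
Let n := (2 * k)%N.
Let w : R[i] := expi (2 * pi / d%:R).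

Lemma wX s : w ^+ s = expi (pi * (2 * s%:R / d%:R)).
Proof. rewrite /w expiX; congr expi; rewrite -mulr_natr; field.
by rewrite pnatr_eq0 /d; lia. Qed.

Lemma wn : w ^+ n = -1.
Proof. rewrite wX /n /d !natrM -expipi; congr expi.
have hk' : (k%:R : R) != 0 by rewrite pnatr_eq0 -lt0n.
by field. Qed.

Lemma wd : w ^+ d = 1.
Proof. have -> : d = (n * 2)%N by rewrite /d /n; lia.
by rewrite exprM wn sqrrN expr1n. Qed.

Lemma wmod s : w ^+ s = w ^+ (s %% d)%N.
Proof. by rewrite {1}(divn_eq s d) mulnC exprD exprM wd expr1n mul1r. Qed.

Lemma wprim s : w ^+ s = 1 -> (s %% d = 0)%N.
Proof.
rewrite wmod; have : ((s %% d)%N < d)%N by rewrite ltn_mod /d; lia.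
move: (s %% d)%N => r hr; case: (posnP r) => // r0.
rewrite wX /expi => -[hc _]; exfalso; move: hc.
pose y : R := pi * (r%:R / d%:R).
have -> : pi * (2 * r%:R / d%:R) = y *+ 2 by rewrite /y mulr2n; field; rewrite pnatr_eq0 /d; lia.
rewrite cos_mulr2n.
have hs : 0 < sin y.
  apply: sin_gt0_pi; apply/andP; split.
    by rewrite mulr_gt0 ?pi_gt0 // divr_gt0 // ltr0n /d; lia.
  rewrite /y -[ltRHS]mulr1 ltr_pM2l ?pi_gt0 // ltr_pdivrMr ?ltr0n; last by rewrite /d; lia.
  by rewrite mul1r ltr_nat.
have : cos y ^+ 2 = 1 - sin y ^+ 2 by rewrite cos2sin2.
move=> -> h.
have : sin y ^+ 2 = 0 by lra.
by move/eqP; rewrite expf_eq0 /= (gt_eqF hs).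
Qed.


Lemma sum_even (g : nat -> R[i]) N :
  \sum_(0 <= j < N.*2) g j = \sum_(0 <= s < N) (g s.*2 + g s.*2.+1).
Proof.
elim: N => [|N IH]; first by rewrite !big_geq.
by rewrite doubleS !big_nat_recr //= IH addrA.
Qed.

Lemma sum_half (g : nat -> R[i]) N :
  \sum_(0 <= j < N + N) g j = \sum_(0 <= j < N) (g j + g (j + N)%N).
Proof.
rewrite (big_cat_nat _ (n:=N)) ?leq_addr //= big_split /=; congr (_ + _).
by rewrite -{1}(add0n N) big_addn addnK.
Qed.

Lemma conjE (x : R[i]) : Num.conj x = conjc x.
Proof. by []. Qed.

Lemma conjcM (x y : R[i]) : conjc (x * y) = conjc x * conjc y.
Proof. exact: rmorphM. Qed.

Lemma conjcX (x : R[i]) m : conjc (x ^+ m) = conjc x ^+ m.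
Proof. exact: rmorphXn. Qed.

Lemma sum_even' (g : nat -> R[i]) N D : D = N.*2 ->
  \sum_(0 <= j < D) g j = \sum_(0 <= s < N) (g s.*2 + g s.*2.+1).
Proof. by move=> ->; apply: sum_even. Qed.

Lemma sum_half' (g : nat -> R[i]) N D : D = (N + N)%N ->
  \sum_(0 <= j < D) g j = \sum_(0 <= j < N) (g j + g (j + N)%N).
Proof. by move=> ->; apply: sum_half. Qed.

Lemma wconj : conjc w = w ^+ (d - 1).
Proof.
have h1 : conjc w * w = 1 by rewrite /w expiN -expiD addNr expi0.
have h2 : w * w ^+ (d - 1) = 1 by rewrite -exprS subn1 prednK ?wd // /d; lia.
by rewrite -[LHS]mulr1 -h2 mulrA h1 mul1r.
Qed.

Lemma tmod (l m : nat) : (l < d)%N -> (m < d)%N -> l != m ->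
  (((l + m * (d - 1)) * 2) %% d = 0)%N ->
  ((l + m * (d - 1)) %% d = n)%N /\ (l %% n = m %% n)%N.
Proof.
move=> hl hm lm.
set t := (l + m * (d - 1))%N.
have e1 : (t + m = m * d + l)%N.
  rewrite /t -addnA -[X in (_ + (_ + X))%N]muln1 -mulnDr subnK; first by rewrite addnC.
  by rewrite /d; lia.
have e2 : ((t + m) %% d = l)%N by rewrite e1 modnMDl modn_small.
rewrite -modnMml => e3.
have hr : (t %% d < d)%N by rewrite ltn_mod /d; lia.
have := divn_eq ((t %% d) * 2) d; rewrite e3 addn0 => e4.
have hq : (((t %% d) * 2) %/ d < 2)%N by rewrite ltn_divLR /d; lia.
move: hq e4; case: (_ %/ _)%N => [|[|q]] // _ e4.
  have r0 : (t %% d = 0)%N by lia.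
  by move: e2; rewrite -modnDml r0 add0n modn_small // => /eqP; rewrite eq_sym (negbTE lm).
have rn : (t %% d = n)%N by rewrite /n; move: e4; rewrite /d; lia.
split=> //.
rewrite -e2 -modnDml rn modn_dvdm ?modnDl //.
by apply/dvdnP; exists 2%N; rewrite /n /d; lia.
Qed.

Variables A B : nat -> R.
Let F (j l : nat) : R := (odd j)%:R * A (l %% n)%N + (odd l)%:R * B (j %% n)%N.

Lemma gen (M : 'M[R]_d) (hM : forall j l : 'I_d, M j l = F j l) :
  is_complex_hadamard (hadamard_prod (fourier_mx R d) (exp_i_mx M)).
Proof.
split.
  by move=> j l; rewrite /hadamard_prod /fourier_mx /exp_i_mx !mxE normrM normrX !norm_expi expr1n mul1r.
move=> l m lm.
pose t := (l + m * (d - 1))%N.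
pose z := w ^+ t.
pose g j := z ^+ j * expi (F j l - F j m).
have -> : \sum_(j < d) hadamard_prod (fourier_mx R d) (exp_i_mx M) j l *
    (hadamard_prod (fourier_mx R d) (exp_i_mx M) j m)^* = \sum_(0 <= j < d) g j.
  rewrite big_mkord; apply: eq_bigr => j _.
  rewrite /hadamard_prod /fourier_mx /exp_i_mx !mxE !hM conjE conjcM conjcX -/w wconj expiN -!exprM mulrACA -exprD -expiD.
  rewrite /g /z -exprM; congr (_ ^+ _ * _).
  rewrite /t; move: (d - 1)%N => e; ring.
have hl := ltn_ord l; have hm := ltn_ord m.
have zX s : z ^+ s = w ^+ (t * s) by rewrite /z -exprM.
case: (boolP (odd l == odd m)) => [/eqP hlm | hlm].
  pose dl := A (l %% n)%N - A (m %% n)%N.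
  have hg s : g s.*2 + g s.*2.+1 = (z ^+ 2) ^+ s * (1 + z * expi dl).
    rewrite /g.
    have -> : F s.*2 l - F s.*2 m = 0 by rewrite /F hlm odd_double /=; ring.
    have -> : F s.*2.+1 l - F s.*2.+1 m = dl by rewrite /F hlm /= odd_double /= /dl; ring.
    rewrite expi0 exprS -mul2n exprM; ring.
  have dd : d = n.*2 by rewrite /d /n -mul2n; lia.
  rewrite (sum_even' _ dd) (eq_bigr _ (fun s _ => hg s)) -big_distrl /=.
  case: (eqVneq (z ^+ 2) 1) => hq.
    have := @wprim (t * 2)%N; rewrite -zX hq => /(_ erefl) h2.
    have [htd hln] := tmod hl hm lm h2.
    have -> : z = -1 by rewrite /z wmod htd wn.
    by rewrite /dl hln subrr expi0 mulr1 addrN mulr0.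
  suff -> : \sum_(0 <= s < n) (z ^+ 2) ^+ s = 0 by rewrite mul0r.
  have := subrX1 (z ^+ 2) n.
  have -> : (z ^+ 2) ^+ n = 1.
    rewrite -exprM zX (_ : (t * (2 * n) = t * d)%N); first by rewrite wmod modnMl expr0.
    by rewrite /d /n; congr (_ * _)%N; lia.
  rewrite subrr big_mkord => /esym /eqP; rewrite mulf_eq0 subr_eq0 (negbTE hq) /=.
  by move/eqP.
have dd : d = (n + n)%N by rewrite /d /n; lia.
have hn : odd n = false by rewrite /n oddM.
have ot : odd t.
  rewrite /t oddD oddM (_ : (d - 1 = (2 * (2 * k - 1)).+1)%N); last by rewrite /d; lia.
  by rewrite /= oddM /= andbT; move: hlm; case: (odd l); case: (odd m).
have zn : z ^+ n = -1 by rewrite zX mulnC exprM wn -signr_odd ot expr1.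
rewrite (sum_half' _ dd) big1 // => j _.
have hF x : F (j + n)%N x = F j x by rewrite /F oddD hn addbF modnDr.
by rewrite /g !hF exprD zn; ring.
Qed.
End S.

Theorem mainTheorem11 (R : realType) (k : nat) (hk : (1 < k)%N)
  (a b : 'I_(2 * k - 1) -> R) :
  is_complex_hadamard
    (hadamard_prod (fourier_mx R (4 * k)) (exp_i_mx (R1 a + R2 b)))
  /\ is_complex_hadamard
    (hadamard_prod (fourier_mx R (4 * k)) (exp_i_mx (R1 a + R2 b)^T)).
Proof.
have hk0 : (0 < k)%N by apply: ltnW.
pose A (c : 'I_(2 * k - 1) -> R) (x : nat) : R :=
  if (x == 0)%N then 0 else alpha_at c x.
have hR1 (c : 'I_(2 * k - 1) -> R) (j l : 'I_(4 * k)) :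
    R1 c j l = (odd j)%:R * A c (l %% (2 * k))%N.
  by rewrite mxE /A; case: (odd j) => /=; rewrite ?mul1r ?mul0r.
split.
  apply: (gen hk0 (A := A a) (B := A b)) => j l.
  by rewrite mxE /R2 [(R1 b)^T _ _]mxE !hR1.
apply: (gen hk0 (A := A b) (B := A a)) => j l.
by rewrite mxE [(R1 a + R2 b) _ _]mxE /R2 [(R1 b)^T _ _]mxE !hR1 addrC.
Qed.
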